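(* Let $x_1,\dots,x_n$ be the values of the variables $x_i$ after the last iteration of Algorithm 1 on an instance of Problem (P). Then either $\sum_{i=1}^n z_ix_i=K$, or $x_i=q_i$ for every $i$.
   Context: Problem (P): given an integer $n\ge1$, reals $0<q_1\le\cdots\le q_n$, $z_1,\dots,z_n>0$ and $K>0$, maximize $\sum_{i=1}^n x_i$ subject to $0\le x_i\le q_i$ for all $i$, $0\le x_1\le x_2\le\cdots\le x_n$, and $\sum_{i=1}^n z_ix_i\le K$. For $1\le i<j\le n+1$ let $\mathrm{sum}(i,j)=z_i+z_{i+1}+\cdots+z_{j-1}$ and $\mathrm{avg}(i,j)=\mathrm{sum}(i,j)/(j-i)$. Algorithm 1: Initialize $S=\{0,n+1\}$, $y_i=\mathrm{avg}(i,n+1)$ and $x_i=0$ for $i=1,\dots,n$, and $\hat B=K$. While $\hat B>0$ and $S\ne\{0,1,\dots,n+1\}$, perform an iteration: let $i^*$ be the index $i\in\{1,\dots,n\}\setminus S$ minimizing $y_i$, ties broken in favour of the smallest index; let $i_L=\max\{j\in S:j<i^*\}$ and $i_R=\min\{j\in S:j>i^*\}$; set $d=\min\{\hat B/((i_R-i^* )y_{i^*}),\ q_{i^*}-x_{i^*}\}$; set $\hat B\leftarrow\hat B-d(i_R-i^* )y_{i^*}$; set $x_i\leftarrow x_i+d$ for all $i^*\le i<i_R$; set $y_i\leftarrow\mathrm{avg}(i,i^* )$ for all $i_L<i<i^*$; add $i^*$ to $S$. When the loop ends, output $x_1,\dots,x_n$. *)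

(* Defs.v *)
From mathcomp Require Import all_boot all_order all_algebra.
Set Implicit Arguments. Unset Strict Implicit. Unset Printing Implicit Defensive.
Import Order.TTheory GRing.Theory Num.Theory.
Local Open Scope ring_scope.

Section Algo.
Variables (R : realFieldType) (n : nat) (q z : nat -> R) (K : R).

Definition zsum (i j : nat) : R := \sum_(i <= k < j) z k.
Definition avg (i j : nat) : R := zsum i j / (j - i)%:R.

(* State of Algorithm 1: the set S (as a list of indices), x, y, and B^. *)
Record state := State { stS : seq nat; stx : nat -> R; sty : nat -> R; stB : R }.

Definition init_state : state :=
  State [:: 0%N; n.+1] (fun _ => 0) (fun i => avg i n.+1) K.

Definition cands (st : state) : seq nat :=
  [seq i <- iota 1 n | i \notin stS st].

Definition istar (st : state) : nat :=
  let c := cands st in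
  foldl (fun b i => if sty st i < sty st b then i else b) (head 0%N c) (behead c).

Definition iL (st : state) (ist : nat) : nat :=
  \max_(j <- stS st | (j < ist)%N) j.
Definition iR (st : state) (ist : nat) : nat :=
  \big[minn/n.+1]_(j <- stS st | (ist < j)%N) j.

Definition step (st : state) : state :=
  let ist := istar st in
  let l := iL st ist in
  let r := iR st ist in
  let w := (r - ist)%:R * sty st ist in
  let d := Num.min (stB st / w) (q ist - stx st ist) in
  State (ist :: stS st)
        (fun i => if (ist <= i < r)%N then stx st i + d else stx st i)
        (fun i => if (l < i < ist)%N then avg i ist else sty st i)
        (stB st - d * w).

(* while B^ > 0 and S <> {0,...,n+1}.  Each iteration adds a new index of
   {1..n} to S, so at most n iterations occur; fuel n is thus exact. *)
Fixpoint run (fuel : nat) (st : state) : state :=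
  if fuel is k.+1 then
    if (0 < stB st) && (cands st != [::]) then run k (step st) else st
  else st.

Definition algo1_output : nat -> R := stx (run n init_state).

End Algo.

(* Main.v *)
Require Import Defs.
From mathcomp Require Import all_boot all_order all_algebra zify lra.
Import Order.TTheory GRing.Theory Num.Theory.
Local Open Scope ring_scope.

Lemma bigmin_ind (Q : nat -> Prop) d (s : seq nat) (P : pred nat) :
  Q d -> (forall j, j \in s -> P j -> Q j) -> Q (\big[minn/d]_(j <- s | P j) j).
Proof.
elim: s => [|a s IH] Hd Hs; rewrite ?big_nil ?big_cons //.
have IH' : Q (\big[minn/d]_(j <- s | P j) j).
  by apply: IH => // j js; apply: Hs; rewrite inE js orbT.
case: ifP => Pa //; rewrite /minn; case: ltnP => _ //.
by apply: Hs; rewrite ?inE ?eqxx.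
Qed.

Lemma bigmin_le d (s : seq nat) (P : pred nat) j :
  j \in s -> P j -> (\big[minn/d]_(j <- s | P j) j <= j)%N.
Proof.
elim: s => [|a s IH] //; rewrite inE big_cons => /orP [/eqP <- | js] Pj.
  by rewrite Pj geq_minl.
case: ifP => _; last exact: IH.
by rewrite geq_min IH ?orbT.
Qed.

Lemma bigmax_ge (s : seq nat) (P : pred nat) j :
  j \in s -> P j -> (j <= \big[maxn/0%N]_(j <- s | P j) j)%N.
Proof.
elim: s => [|a s IH] //; rewrite inE big_cons => /orP [/eqP <- | js] Pj.
  by rewrite Pj leq_maxl.
case: ifP => _; last exact: IH.
by rewrite leq_max IH ?orbT.
Qed.

Lemma bigmax_lt i (s : seq nat) (P : pred nat) :
  (0 < i)%N -> (forall j, j \in s -> P j -> j < i)%N ->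
  (\big[maxn/0%N]_(j <- s | P j) j < i)%N.
Proof.
elim: s => [|a s IH] Hi Hs; rewrite ?big_nil ?big_cons //.
have IH' : (\big[maxn/0%N]_(j <- s | P j) j < i)%N.
  by apply: IH => // j js; apply: Hs; rewrite inE js orbT.
case: ifP => Pa //; rewrite gtn_max IH' andbT.
by apply: Hs; rewrite ?inE ?eqxx.
Qed.

Lemma foldl_sel (f : nat -> nat -> bool) b (s : seq nat) :
  foldl (fun b i => if f b i then i else b) b s \in b :: s.
Proof.
elim: s b => [|a s IH] b /=; first by rewrite inE.
case: ifP => _.
  by have := IH a; rewrite !inE => /orP[->|->]; rewrite ?orbT.
by have := IH b; rewrite !inE => /orP[->|->]; rewrite ?orbT.
Qed.

Lemma size_filter_neq (s : seq nat) x : x \in s ->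
  (size [seq y <- s | y != x] < size s)%N.
Proof.
elim: s => [|a s IH] //; rewrite inE /= => /orP[/eqP ->|xs].
  by rewrite eqxx ltnS size_filter count_size.
case: ifP => _ /=; first by rewrite ltnS IH.
by apply: (leq_trans (IH xs)).
Qed.

Section Main.
Variables (R : realFieldType) (n : nat) (q z : nat -> R) (K : R).
Hypothesis hz : forall i, (1 <= i <= n)%N -> 0 < z i.

Definition nextS (S : seq nat) i := \big[minn/n.+1]_(j <- S | (i < j)%N) j.

Definition Inv (st : state R) : Prop :=
 [/\ (forall j, j \in stS st -> j <= n.+1)%N,
     (forall i, (1 <= i <= n)%N -> i \notin stS st -> sty st i = avg z i (nextS (stS st) i)),
     \sum_(1 <= i < n.+1) z i * stx st i + stB st = K,
     0 <= stB st &
     (stB st = 0 \/ forall i, (1 <= i <= n)%N -> i \in stS st -> stx st i = q i)].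

Lemma istar_in (st : state R) : cands n st != [::] -> istar n st \in cands n st.
Proof.
rewrite /istar; case: (cands n st) => [|a s] //= _.
exact: foldl_sel.
Qed.

Lemma zsum_pos i r : (1 <= i)%N -> (i < r)%N -> (r <= n.+1)%N -> 0 < zsum z i r.
Proof.
move=> h1 h2 h3; rewrite /zsum big_ltn //.
have : 0 <= \sum_(i.+1 <= k < r) z k.
  rewrite big_nat_cond; apply: sumr_ge0 => k /andP[/andP[k1 k2] _].
  apply: ltW; apply: hz; lia.
have : 0 < z i by apply: hz; lia.
lra.
Qed.

Lemma step_inv (st : state R) : Inv st -> 0 < stB st -> cands n st != [::] ->
  Inv (step n q z st) /\ (size (cands n (step n q z st)) < size (cands n st))%N.
Proof.
move=> [hS hY hSum hB hE] hBpos hne.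
have hc := @istar_in st hne.
set ist := istar n st in hc *.
have hc' := hc; rewrite mem_filter mem_iota in hc'.
move/andP: hc' => [istS /andP[ist1 istn]].
set r := iR n st ist.
have hr : (ist < r <= n.+1)%N.
  rewrite /r /iR; apply: (@bigmin_ind (fun j => (ist < j <= n.+1)%N)) => [|j jS ij]; first by lia.
  by rewrite ij hS.
have hrS : forall j, j \in stS st -> (ist < j)%N -> (r <= j)%N.
  by move=> j jS ij; rewrite /r /iR; apply: bigmin_le.
have hy : sty st ist = avg z ist r by apply: hY => //; lia.
set w := zsum z ist r.
have hw : (r - ist)%:R * sty st ist = w.
  rewrite hy /avg mulrC divfK // pnatr_eq0 subn_eq0 -ltnNge; lia.
have wpos : 0 < w by apply: zsum_pos; lia.
set l := iL st ist.
set d := Num.min (stB st / w) (q ist - stx st ist).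
have -> : step n q z st = State (ist :: stS st)
   (fun i => if (ist <= i < r)%N then stx st i + d else stx st i)
   (fun i => if (l < i < ist)%N then avg z i ist else sty st i)
   (stB st - d * w).
  by rewrite /step -/ist -/r hw.
have hdw : d * w <= stB st.
  have : d <= stB st / w by rewrite /d ge_min lexx.
  by move=> h; rewrite -(ler_pM2r wpos) divfK ?lt0r_neq0 in h.
split; last first.
  have -> : cands n (State (ist :: stS st)
   (fun i => if (ist <= i < r)%N then stx st i + d else stx st i)
   (fun i => if (l < i < ist)%N then avg z i ist else sty st i)
   (stB st - d * w)) = [seq y <- cands n st | y != ist].
    rewrite /cands /= -filter_predI; apply: eq_filter => y /=.
    by rewrite inE negb_or andbC.
  exact: size_filter_neq.
split => /=.
- by move=> j; rewrite inE => /orP[/eqP ->|/hS //]; lia.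
- move=> i /andP[i1 iN]; rewrite inE negb_or => /andP[iist iS].
  rewrite /nextS big_cons -/(nextS (stS st) i).
  have iist' : i != ist by [].
  case: ifP => hli.
    have hge : (ist <= nextS (stS st) i)%N.
      rewrite /nextS; apply: (@bigmin_ind (fun j => ist <= j)%N) => [|j jS ij]; first by lia.
      case: (ltnP j ist) => // hj.
      have := @bigmax_ge (stS st) (fun j => j < ist)%N j jS hj.
      rewrite -/(iL st ist) -/l; move/andP: hli => [? ?]; lia.
    move/andP: (hli) => [_ hi]; rewrite hi; congr avg; apply/esym/minn_idPl; exact: hge.
  rewrite hY //; last by lia.
  case: (ltnP i ist) => hi; last by [].
  congr avg; apply/esym/minn_idPr.
  apply/negPn/negP => hgt.
  have : (l < i)%N.
    rewrite /l /iL; apply: bigmax_lt => [|j jS hj]; first by lia.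
    case: (ltnP j i) => // hij.
    have jne : j != i by apply/eqP => ji; move: iS; rewrite -ji jS.
    have := @bigmin_le n.+1 (stS st) (fun j => i < j)%N j jS.
    rewrite /nextS in hgt; move=> h.
    have h' : (i < j)%N by lia.
    have := h h'; lia.
  by move=> hl; move: hli; rewrite hl hi.
- have e : \sum_(1 <= i < n.+1) z i * (if (ist <= i < r)%N then stx st i + d else stx st i)
        = \sum_(1 <= i < n.+1) z i * stx st i + d * w.
    rewrite (eq_bigr (fun i => z i * stx st i + (if (ist <= i < r)%N then z i else 0) * d)); last first.
      by move=> i _; case: ifP => _; rewrite ?mul0r ?addr0 // mulrDr.
    rewrite big_split /= -mulr_suml mulrC; congr (_ + _ * _).
    rewrite (@big_cat_nat _ _ _ ist 1 n.+1) //; try lia.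
    rewrite (@big_cat_nat _ _ _ r ist n.+1) //; try lia.
    rewrite (@eq_big_nat _ _ _ 1 ist _ (fun _ => 0)); last first.
      by move=> k hk; case: ifP => // /andP[? ?]; exfalso; lia.
    rewrite (@eq_big_nat _ _ _ r n.+1 _ (fun _ => 0)); last first.
      by move=> k hk; case: ifP => // /andP[? ?]; exfalso; lia.
    rewrite (@eq_big_nat _ _ _ ist r _ z); last first.
      by move=> k hk; rewrite hk.
    by rewrite !big1_eq /= add0r addr0.
  rewrite e; lra.
- lra.
- have [hm|hm] := leP (stB st / w) (q ist - stx st ist).
    left; rewrite /d min_l // divfK ?lt0r_neq0 //; exact: subrr.
  right; rewrite /d min_r ?ltW //.
  move=> i hi; rewrite inE => /orP[/eqP ->|iS].
    have -> : (ist <= ist < r)%N by rewrite leqnn /=; lia.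
    by rewrite addrC subrK.
  case: hE => [B0|hall]; first by move: hBpos; rewrite B0 ltxx.
  rewrite ifF; first exact: hall.
  apply/negbTE/negP => /andP[h1 h2].
  have ne : i != ist by apply/eqP => e; move: istS; rewrite -e iS.
  have := hrS i iS; lia.
Qed.

Lemma run_inv fuel (st : state R) : Inv st -> (size (cands n st) <= fuel)%N ->
  Inv (run n q z fuel st) /\
  (stB (run n q z fuel st) <= 0 \/ cands n (run n q z fuel st) = [::]).
Proof.
elim: fuel st => [|k IH] st hI hs /=.
  split => //; right; move: hs; rewrite leqn0 size_eq0 => /eqP //.
case: ifP => [/andP[hb hc] | hf].
  have [hI' hs'] := @step_inv st hI hb hc.
  by apply: IH => //; rewrite -ltnS; apply: leq_trans hs' hs.
split => //; move/negbT: hf; rewrite negb_and => /orP[h|h].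
  by left; rewrite leNgt.
by right; move/negPn: h => /eqP.
Qed.

Lemma init_inv : 0 < K -> Inv (init_state n z K).
Proof.
move=> hK; split => /=.
- by move=> j; rewrite !inE => /orP[/eqP->|/eqP->].
- move=> i /andP[i1 iN] _; rewrite /nextS !big_cons big_nil /=.
  by rewrite ltnS iN minnn.
- by rewrite big1 ?add0r // => i _; rewrite mulr0.
- exact: ltW.
- right => i /andP[i1 iN]; rewrite !inE => /orP[/eqP e|/eqP e]; exfalso; lia.
Qed.

End Main.

Theorem lemma4 (R : realFieldType) (n : nat) (q z : nat -> R) (K : R) :
  (1 <= n)%N ->
  0 < q 1%N ->
  (forall i, (1 <= i < n)%N -> q i <= q i.+1) ->
  (forall i, (1 <= i <= n)%N -> 0 < z i) ->
  0 < K ->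
  let x := algo1_output n q z K in
  \sum_(1 <= i < n.+1) z i * x i = K \/ (forall i, (1 <= i <= n)%N -> x i = q i).
Proof.
move=> hn hq1 hqm hz hK x.
have hs : (size (cands n (init_state n z K)) <= n)%N.
  by rewrite size_filter (leq_trans (count_size _ _)) // size_iota.
have [[hS hY hSum hB hE] hend] := @run_inv R n q z K hz n _ (@init_inv R n q z K hK) hs.
rewrite /x /algo1_output.
set st := run n q z n (init_state n z K) in hS hY hSum hB hE hend *.
case: hE => [B0|hall].
  by left; rewrite -hSum B0 addr0.
case: hend => [hle|hc].
  have B0 : stB st = 0 by apply/eqP; rewrite eq_le hle hB.
  by left; rewrite -hSum B0 addr0.
right => i hi; apply: hall => //.
have : i \notin cands n st by rewrite hc.
by rewrite mem_filter mem_iota negb_and negbK => /orP[//|]; rewrite add1n ltnS hi; lia.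
Qed.
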